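(* Let $n$ be a positive integer. Let $U_n\subseteq T_n$ be the set of triples $(A,B,C)\in T_n$ such that $C$ has at least one point strictly above the horizontal axis and either $B$ ends with a down step or $B$ is empty. Let $D_n^+\subseteq D_n$ be the set of pairs $(H,X)\in D_n$ in which $X$ is strictly above the horizontal axis. Define $s:U_n\to D_n^+$ as follows: for $(A,B,C)\in U_n$, let $K$ be the leftmost point of $C$ of maximal height, let $K$ cut $C$ into a left part $C_1$ and a right part $C_2$, and set $s(A,B,C)=(H,X)$, where $H$ is the concatenation of $C_1$, $A$, $B$, $C_2$ (in this order) and $X$ is the point of $H$ where $A$ ends and $B$ begins. Then $s$ is a bijection from $U_n$ onto $D_n^+$.
   Context: A lattice path here is a finite (possibly empty) sequence of steps, each an up step $(1,1)$ or a down step $(1,-1)$, drawn as a polygonal line from a given starting lattice point; its lattice points are its starting point and the endpoints of its steps; the height of a point is its vertical coordinate. $T_n$ is the set of ordered triples $(A,B,C)$ of lattice paths such that for some nonnegative integers $i,j,k$ with $i+j+k=n$, $A$ has $i$ up and $i$ down steps, $B$ has $j$ up and $j$ down steps, and $C$ has $k$ up and $k$ down steps; each of $A,B,C$ is regarded as drawn starting (and hence ending) on the horizontal axis, and statements about heights of points of $C$ or of $C$ being above/below the axis refer to this drawing. $D_n$ is the set of pairs $(H,X)$ where $H$ is a lattice path with $n$ up steps and $n$ down steps drawn from $(0,0)$ to $(2n,0)$ and $X$ is one of the $2n+1$ lattice points of $H$. Concatenation of paths means drawing them successively, each starting at the endpoint of the preceding one, the first starting at $(0,0)$. *)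

(* Defs.v *)
From mathcomp Require Import all_boot all_order all_algebra.
Set Implicit Arguments. Unset Strict Implicit. Unset Printing Implicit Defensive.
Import Order.TTheory GRing.Theory Num.Theory.

(* A lattice path is a sequence of steps: true = up step (1,1),
   false = down step (1,-1).  A path p has size p steps and size p + 1
   lattice points, indexed 0 .. size p (point m is the endpoint of the
   first m steps, point 0 being the starting point). *)
Definition lpath := seq bool.

Definition step (b : bool) : int := if b then 1%R else (-1)%R.

(* height (relative to the starting point, drawn on the axis) of point m *)
Definition hgt (p : lpath) (m : nat) : int := (\sum_(b <- take m p) step b)%R.

Definition balanced (p : lpath) : bool := count id p == count negb p.

Definition upsteps (p : lpath) : nat := count id p.

Definition T (n : nat) : pred (lpath * lpath * lpath) :=
  fun t => let: (A, B, C) := t in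
    [&& balanced A, balanced B, balanced C &
        upsteps A + upsteps B + upsteps C == n].

Definition U (n : nat) : pred (lpath * lpath * lpath) :=
  fun t => let: (A, B, C) := t in
    [&& t \in T n,
        [exists m : 'I_(size C).+1, (0 < hgt C m)%R] &
        (B == [::]) || (last true B == false)].

(* D_n : pairs (H, x) with H having n up and n down steps, x the index
   of one of its 2n+1 points. *)
Definition D (n : nat) : pred (lpath * nat) :=
  fun d => let: (H, x) := d in
    [&& upsteps H == n, count negb H == n & x <= size H].

Definition Dplus (n : nat) : pred (lpath * nat) :=
  fun d => let: (H, x) := d in (d \in D n) && (0 < hgt H x)%R.

Definition maxh (C : lpath) : int :=
  (\big[Num.max/0%R]_(m < (size C).+1) hgt C m)%R.

Definition leftmost_max (C : lpath) : nat :=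
  find (fun m => hgt C m == maxh C) (iota 0 (size C).+1).

Definition s (t : lpath * lpath * lpath) : lpath * nat :=
  let: (A, B, C) := t in
  let k := leftmost_max C in
  (take k C ++ A ++ B ++ drop k C, k + size A).

(* Main.v *)
Require Import Defs.
From mathcomp Require Import all_boot all_order all_algebra.
From mathcomp Require Import zify ring lra.
Set Implicit Arguments. Unset Strict Implicit. Unset Printing Implicit Defensive.
Import Order.TTheory GRing.Theory Num.Theory.

Definition tot (p : lpath) : int := (\sum_(b <- p) step b)%R.

Lemma tot_cat p q : tot (p ++ q) = (tot p + tot q)%R.
Proof. by rewrite /tot big_cat. Qed.

Lemma tot_count p : tot p = ((count id p)%:Z - (count negb p)%:Z)%R.
Proof.
elim: p => [|b p IH]; first by rewrite /tot big_nil.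
rewrite /tot big_cons -/(tot p) IH /=; case: b => /=; rewrite /step;
  rewrite ?add0n ?add1n ?PoszD; ring.
Qed.

Lemma balancedE p : balanced p = (tot p == 0%R).
Proof. by rewrite /balanced tot_count subr_eq0 eqz_nat. Qed.

Lemma hgtE p m : hgt p m = tot (take m p).
Proof. by []. Qed.

Lemma hgt_catl p q m : m <= size p -> hgt (p ++ q) m = hgt p m.
Proof. by move=> h; rewrite !hgtE takel_cat. Qed.

Lemma hgt_catr p q m : hgt (p ++ q) (size p + m) = (tot p + hgt q m)%R.
Proof.
rewrite !hgtE take_cat ltnNge leq_addr /= addKn tot_cat //.
Qed.

Lemma hgt_over p m : size p <= m -> hgt p m = tot p.
Proof. by move=> h; rewrite hgtE take_oversize. Qed.

Lemma hgt_size p : hgt p (size p) = tot p.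
Proof. exact: hgt_over. Qed.

Lemma hgt0 p : hgt p 0 = 0%R.
Proof. by rewrite hgtE take0 /tot big_nil. Qed.

Lemma hgtS p m : m < size p -> hgt p m.+1 = (hgt p m + step (nth true p m))%R.
Proof.
move=> h; rewrite !hgtE (take_nth true h) -cats1 tot_cat /tot big_cons big_nil addr0 //.
Qed.

Lemma hgtS_le p m : (hgt p m.+1 <= hgt p m + 1)%R.
Proof.
case: (ltnP m (size p)) => h.
  by rewrite hgtS // lerD2l /step; case: (nth _ _ _).
rewrite !hgt_over ?(leq_trans h) //; lra.
Qed.

Lemma hgtS_ge p m : (hgt p m - 1 <= hgt p m.+1)%R.
Proof.
case: (ltnP m (size p)) => h.
  by rewrite hgtS // lerD2l /step; case: (nth _ _ _).
rewrite !hgt_over ?(leq_trans h) //; lra.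
Qed.
Lemma maxh_ge C m : (hgt C m <= maxh C)%R.
Proof.
case: (leqP m (size C)) => h.
  by rewrite /maxh (le_bigmax _ _ (Ordinal (n:=(size C).+1) (m:=m) h)).
rewrite hgt_over ?(ltnW h) // -(hgt_over (leqnn _)).
by rewrite /maxh (le_bigmax _ _ (@ord_max (size C))).
Qed.

Lemma maxh_ex C : exists2 m, m <= size C & hgt C m = maxh C.
Proof.
case: (@arg_maxP _ _ _ (@ord0 (size C)) xpredT (fun i : 'I_(size C).+1 => hgt C i) erefl)
  => i _ Hi.
exists i; first by rewrite -ltnS.
apply: le_anti; rewrite maxh_ge /=.
apply/bigmax_leP; split.
  by rewrite -(hgt0 C); exact: (Hi ord0).
by move=> j _; exact: Hi.
Qed.

Lemma maxh_ge0 C : (0 <= maxh C)%R.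
Proof. by rewrite -(hgt0 C) maxh_ge. Qed.

Lemma find_iota_spec (P : pred nat) N : (exists2 m, m < N & P m) ->
  [/\ find P (iota 0 N) < N, P (find P (iota 0 N)) &
      forall j, j < find P (iota 0 N) -> ~~ P j].
Proof.
case=> m mN Pm.
have hP : has P (iota 0 N) by apply/hasP; exists m; rewrite ?mem_iota.
have hf := hP; rewrite has_find size_iota in hf.
split => //.
  by have := nth_find 0 hP; rewrite nth_iota.
move=> j hj; have := before_find 0 hj; rewrite nth_iota ?(ltn_trans hj) // => ->.
by [].
Qed.

Lemma find_iota_eq (P : pred nat) N k : k < N -> P k -> (forall j, j < k -> ~~ P j) ->
  find P (iota 0 N) = k.
Proof.
move=> kN Pk Hk; have [h1 h2 h3] := @find_iota_spec P N (ex_intro2 _ _ k kN Pk).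
case: (ltngtP (find P (iota 0 N)) k) => // h.
- by move: (Hk _ h); rewrite h2.
- by move: (h3 _ h); rewrite Pk.
Qed.

Lemma lmax_spec C :
  [/\ leftmost_max C <= size C, hgt C (leftmost_max C) = maxh C &
      forall j, j < leftmost_max C -> (hgt C j < maxh C)%R].
Proof.
have [m hm Hm] := maxh_ex C.
have [h1 h2 h3] := @find_iota_spec (fun m => hgt C m == maxh C) (size C).+1
   (ex_intro2 _ _ m (hm : m < (size C).+1) (introT eqP Hm)).
rewrite /leftmost_max; split => //; first by apply/eqP.
move=> j /h3 hj; rewrite lt_neqAle maxh_ge andbT; exact: hj.
Qed.

Lemma lmax_eq C k : k <= size C -> hgt C k = maxh C ->
  (forall j, j < k -> hgt C j != maxh C) -> leftmost_max C = k.
Proof.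
move=> h1 h2 h3; apply: find_iota_eq => //; by apply/eqP.
Qed.

Lemma balanced_count p : balanced p -> count negb p = count id p.
Proof. by move/eqP. Qed.

Lemma sU n t : t \in U n -> s t \in Dplus n.
Proof.
case: t => [[A B] C]; rewrite unfold_in /U /T unfold_in /=.
case/and3P => /and4P [bA bB bC /eqP hn] /existsP [m0 hm0] _.
have [hk1 hk2 hk3] := lmax_spec C.
set k := leftmost_max C in hk1 hk2 hk3 *.
have cC := count_cat id (take k C) (drop k C); rewrite cat_take_drop in cC.
have cC' := count_cat negb (take k C) (drop k C); rewrite cat_take_drop in cC'.
have sC := size_cat (take k C) (drop k C); rewrite cat_take_drop in sC.
rewrite unfold_in /Dplus unfold_in /D /upsteps !count_cat !size_cat !size_takel //.
rewrite (balanced_count bA) (balanced_count bB).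
move: bA; rewrite balancedE => /eqP tA.
rewrite (balanced_count bC) in cC'.
rewrite /upsteps in hn.
apply/andP; split.
  apply/and3P; split; apply/eqP; lia.
have -> : k + size A = size (take k C) + size A by rewrite size_takel.
rewrite hgt_catr hgt_catl ?leqnn // hgt_size tA addr0.
rewrite -hgtE hk2; exact: lt_le_trans hm0 (maxh_ge _ _).
Qed.

Definition Qp (H : lpath) (h : int) (j : nat) : bool :=
  [forall i : 'I_(size H).+1, (j <= i) ==> (hgt H i <= h)%R].

Definition gk (H : lpath) (x : nat) : nat :=
  find (fun m => hgt H m == hgt H x) (iota 0 (size H).+1).
Definition ge (H : lpath) (x : nat) : nat :=
  x + find (fun j => Qp H (hgt H x) (x + j)) (iota 0 (size H - x).+1).
Definition g (d : lpath * nat) : lpath * lpath * lpath :=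
  let: (H, x) := d in
  (drop (gk H x) (take x H), drop x (take (ge H x) H),
   take (gk H x) H ++ drop (ge H x) H).

Lemma hgt_take C k j : j <= k -> hgt (take k C) j = hgt C j.
Proof. by move=> h; rewrite !hgtE take_takel. Qed.

Lemma gs n t : t \in U n -> g (s t) = t.
Proof.
case: t => [[A B] C]; rewrite unfold_in /U /T unfold_in /=.
case/and3P => /and4P [bA bB bC /eqP hn] /existsP [m0 hm0] hB.
have [hk1 hk2 hk3] := lmax_spec C.
set k := leftmost_max C in hk1 hk2 hk3 *.
move: bA bB bC; rewrite !balancedE => /eqP tA /eqP tB /eqP tC.
set C1 := take k C; set C2 := drop k C.
have sC1 : size C1 = k by rewrite size_takel.
have eC : C1 ++ C2 = C by rewrite cat_take_drop.
have sC : size C = k + size C2 by rewrite -eC size_cat sC1.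
have tC1 : tot C1 = maxh C by rewrite -hk2 hgtE.
set H := C1 ++ A ++ B ++ C2.
have sH : size H = k + size A + size B + size C2 by rewrite !size_cat sC1; lia.
have hx : hgt H (k + size A) = maxh C.
  by rewrite -sC1 /H hgt_catr hgt_catl ?leqnn // hgt_size tA addr0.
have hl : forall j, j <= k -> hgt H j = hgt C j.
  by move=> j hj; rewrite /H hgt_catl ?sC1 // hgt_take.
have hr : forall j, hgt H (k + size A + size B + j) = hgt C (k + j).
  move=> j; rewrite -eC -sC1 hgt_catr /H !catA -!size_cat hgt_catr !tot_cat tA tB.
  by rewrite !addr0.
rewrite /g.
have -> : gk H (k + size A) = k.
  rewrite /gk hx.
  apply: find_iota_eq; first by rewrite ltnS sH; lia.
    by rewrite hl // hk2.
  by move=> j hj; rewrite hl ?(ltnW hj) // lt_eqF // hk3.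
have -> : ge H (k + size A) = k + size A + size B.
  rewrite /ge hx; congr (_ + _).
  apply: find_iota_eq; first by rewrite ltnS sH; lia.
    apply/forallP => i; apply/implyP => hi.
    have -> : nat_of_ord i = k + size A + size B + (i - (k + size A + size B)) by lia.
    by rewrite hr maxh_ge.
  move=> j hj; apply/negP => /forallP Hq.
  have [B' eB] : exists B', B = rcons B' false.
    move: hB hj; case/lastP: (B) => [|B' b] //= hB' _; exists B'.
    by case: b hB' => //; rewrite last_rcons orbF; case: (B').
  rewrite eB size_rcons in hj sH.
  have iH : k + size A + size B' < (size H).+1 by rewrite ltnS sH; lia.
  have := Hq (Ordinal iH); rewrite /= leq_add2l -ltnS hj /=.
  have -> : H = (C1 ++ A ++ B') ++ (false :: C2) by rewrite /H eB -cats1 -!catA.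
  rewrite (_ : k + size A + size B' = size (C1 ++ A ++ B')); last by rewrite !size_cat; lia.
  rewrite hgt_catl // hgt_size !tot_cat tC1 tA.
  move: tB; rewrite eB -cats1 tot_cat /tot big_cons big_nil /step => tB.
  have -> : (\sum_(b <- B') (if b then 1 else -1) = 1 :> int)%R by lra.
  by rewrite add0r -subr_ge0 opprD addrA subrr sub0r.
have eH1 : H = (C1 ++ A) ++ (B ++ C2) by rewrite /H catA.
have eH2 : H = (C1 ++ A ++ B) ++ C2 by rewrite /H !catA.
rewrite {1}eH1 take_size_cat; last by rewrite size_cat sC1.
rewrite drop_size_cat //.
rewrite {1}eH2 take_size_cat; last by rewrite !size_cat sC1; lia.
rewrite catA drop_size_cat; last by rewrite size_cat sC1.
rewrite /H take_size_cat //.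
rewrite catA catA drop_size_cat ?eC //.
by rewrite !size_cat sC1; lia.
Qed.

Lemma Qp_use H h j : (tot H <= h)%R -> Qp H h j -> forall i, j <= i -> (hgt H i <= h)%R.
Proof.
move=> hT /forallP hq i hi; case: (leqP i (size H)) => his.
  by have := hq (Ordinal (n:=(size H).+1) (m:=i) his); rewrite /= hi.
by rewrite hgt_over ?(ltnW his).
Qed.

Lemma take_cat_drop (s0 : lpath) i j : i <= j -> take i s0 ++ drop i (take j s0) = take j s0.
Proof. by move=> h; rewrite -{1}(take_takel s0 h) cat_take_drop. Qed.

Lemma gD n d : d \in Dplus n -> g d \in U n /\ s (g d) = d.
Proof.
case: d => H x; rewrite unfold_in /Dplus unfold_in /D /=.
case/andP => /and3P [/eqP hn1 /eqP hn2 hxs] hpos.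
set h := hgt H x in hpos.
have tH : tot H = 0%R by rewrite tot_count -/(upsteps H) hn1 hn2 subrr.
have [hk1 hk2 hk3] := @find_iota_spec (fun m => hgt H m == h) (size H).+1
   (ex_intro2 (fun m => m < (size H).+1) (fun m => hgt H m == h) x (hxs : x < (size H).+1) (eqxx h)).
rewrite -/(gk H x) in hk1 hk2 hk3.
set k := gk H x in hk1 hk2 hk3.
move/eqP: hk2 => hk2.
have hkx : k <= x.
  by rewrite leqNgt; apply/negP => /hk3; rewrite eqxx.
have hbelow : forall j, j < k -> (hgt H j < h)%R.
  elim=> [|j IH] hj; first by rewrite hgt0.
  have := IH (ltnW hj); have := hgtS_le H j; have := hk3 _ hj.
  rewrite /= => hne h1 h2; rewrite lt_neqAle hne /=.
  have : (hgt H j + 1 <= h)%R by rewrite lezD1.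
  exact: le_trans.
have hQs : Qp H h (x + (size H - x)).
  apply/forallP => i; apply/implyP; rewrite subnKC // => hi.
  have -> : nat_of_ord i = size H by have := ltn_ord i; lia.
  by rewrite hgt_size tH ltW.
have [he1 he2 he3] := @find_iota_spec (fun j => Qp H h (x + j)) (size H - x).+1
   (ex_intro2 (fun m => m < (size H - x).+1) (fun j => Qp H h (x + j)) (size H - x) (leqnn _) hQs).
set f := find _ _ in he1 he2 he3.
have -> : ge H x = x + f by [].
set e := x + f.
have hxe : x <= e by rewrite /e leq_addr.
have hes : e <= size H by rewrite /e; lia.
have hTh : (tot H <= h)%R by rewrite tH ltW.
have hQe := Qp_use hTh he2.
have heh : hgt H e = h /\ (0 < f -> nth true H e.-1 = false).
  case: (posnP f) => hf.
    by split => //; rewrite /e hf addn0.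
  have := he3 f.-1; rewrite ltn_predL hf /Qp => /(_ isT) /forallPn [i].
  rewrite negb_imply => /andP [hi1 hi2].
  rewrite -ltNge in hi2.
  have ie : nat_of_ord i = e.-1.
    have : ~~ (e <= i) by apply/negP => /hQe; rewrite leNgt hi2.
    move: hi1; rewrite /e; lia.
  rewrite ie in hi2.
  have he1' : e.-1 < size H by rewrite /e; lia.
  have := hgtS he1'; rewrite prednK; last by rewrite /e; lia.
  have := hQe e (leqnn _).
  rewrite -lezD1 in hi2.
  case: (nth true H e.-1) => /= h1 h2; rewrite /step in h2.
    by exfalso; move: h1 hi2; rewrite h2; lra.
  by split => //; move: h1 hi2; rewrite h2; lra.
case: heh => heh hlast.
have hks : k <= size H by apply: leq_trans hkx hxs.
set C1 := take k H; set A := drop k (take x H); set B := drop x (take e H).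
set C2 := drop e H.
have sC1 : size C1 = k by rewrite size_takel.
have sA : size A = x - k by rewrite /A size_drop size_takel.
have eH : H = C1 ++ A ++ B ++ C2.
  by rewrite /C1 /A /B /C2 catA take_cat_drop // catA take_cat_drop // cat_take_drop.
have tC1 : tot C1 = h by rewrite -hgtE.
have tX : tot (take x H) = h by [].
have tE : tot (take e H) = h by rewrite -hgtE.
have tA : tot A = 0%R.
  by move: tX; rewrite -(take_cat_drop H hkx) tot_cat -/C1 -/A tC1; lra.
have tB : tot B = 0%R.
  by move: tE; rewrite -(take_cat_drop H hxe) tot_cat -/B tX; lra.
have tC2 : tot C2 = (- h)%R.
  by move: tH; rewrite -(cat_take_drop e H) tot_cat tE -/C2; lra.
set C := C1 ++ C2.
have tC : tot C = 0%R by rewrite /C tot_cat tC1 tC2 subrr.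
have sCk : k <= size C by rewrite /C size_cat sC1 leq_addr.
have hCk : hgt C k = h by rewrite /C hgt_catl ?sC1 // -sC1 hgt_size.
have hCle : forall m, m <= k -> hgt C m = hgt H m.
  by move=> m hm; rewrite /C hgt_catl ?sC1 // hgt_take.
have hCmax : forall m, (hgt C m <= h)%R.
  move=> m; case: (leqP m k) => hm.
    rewrite hCle //; case: (ltnP m k) => hm'; first by rewrite ltW // hbelow.
    have -> : m = k by apply/eqP; rewrite eqn_leq hm hm'.
    by rewrite hk2.
  have -> : m = size C1 + (m - k) by rewrite sC1; lia.
  rewrite /C hgt_catr tC1.
  have := hQe (e + (m - k)) (leq_addr _ _).
  have se : size (take e H) = e by rewrite size_takel.
  rewrite -{1}se -{1}(cat_take_drop e H) hgt_catr tE -/C2; lra.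
have hmax : maxh C = h.
  have [m _ hm] := maxh_ex C.
  by apply: le_anti; rewrite -hm hCmax /= -hCk hm maxh_ge.
have hlm : leftmost_max C = k.
  apply: lmax_eq => //; first by rewrite hmax.
  by move=> j hj; rewrite hmax hCle ?(ltnW hj) // lt_eqF // hbelow.
split.
  rewrite unfold_in /U /T unfold_in /= !balancedE tA tB tC !eqxx /=.
  apply/and3P; split.
  - move: hn1; rewrite /upsteps eH /C !count_cat => <-; apply/eqP; lia.
  - by apply/existsP; exists (Ordinal (n:=(size C).+1) (m:=k) sCk); rewrite /= hCk.
  - case: (posnP f) => hf.
      by rewrite /B /e hf addn0 drop_oversize ?eqxx // size_take_min geq_minl.
    have he1' : e.-1 < size H by rewrite /e; lia.
    have eB : B = rcons (drop x (take e.-1 H)) (nth true H e.-1).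
      rewrite /B -{1}(prednK (n:=e)); last by rewrite /e; lia.
      rewrite (take_nth true he1') drop_rcons //.
      by rewrite size_takel ?(ltnW he1') // /e; lia.
    by rewrite -/B eB last_rcons hlast // orbT.
rewrite /s hlm /C take_size_cat // drop_size_cat // -eH sA; congr (_, _); lia.
Qed.

Theorem lemma2 (n : nat) (hn : 0 < n) :
  [/\ {in U n, forall t, s t \in Dplus n},
      {in U n &, injective s} &
      {in Dplus n, forall d, exists2 t, t \in U n & s t = d}].
Proof.
split.
- by move=> t; exact: sU.
- move=> t1 t2 h1 h2 e; rewrite -(gs h1) -(gs h2) e; reflexivity.
- move=> d hd; have [h1 h2] := gD hd; exists (g d); [exact: h1 | exact: h2].
Qed.
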